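(* Let $\mathcal{R}$ be a finite valuation ring with residue field of cardinality $q$ and with uniformizer of nilpotency degree $r$ (so $|\mathcal{R}|=q^r$), and let $\mathcal{R}^*$ denote its group of units. Let $G$ be a subgroup of $\mathcal{R}^*$, let $g,h\colon G\to\mathcal{R}^*$ be arbitrary functions, and define $f\colon G\times\mathcal{R}^*\to\mathcal{R}$ by $f(x,y)=g(x)(h(x)+y)$. Put $m=\mu(g\cdot h)$, where $(g\cdot h)(x)=g(x)h(x)$. Then there is a constant $c>0$ depending only on $r$ such that for all sets $A\subset G$ and $B,C\subset\mathcal{R}^*$, \[|f(A,B)|\,|B\cdot C|\ \ge\ c\min\left\{\frac{q^r|B|}{m},\ \frac{|A||B|^2|C|}{m^2q^{2r-1}}\right\}.\]
   Context: A finite valuation ring is a finite commutative ring with identity that is local (has a unique maximal ideal) and principal (every ideal is principal); its maximal ideal is generated by a non-unit $z$ (a uniformizer), the residue field $\mathcal{R}/(z)$ has $q$ elements, and $r$ is the least integer with $z^r=0$. For a function $\varphi\colon G\to\mathcal{R}$, $\mu(\varphi)=\max_{t\in\mathcal{R}}|\{x\in G:\varphi(x)=t\}|$. Notation: $f(A,B)=\{f(x,y):x\in A,y\in B\}$ and $B\cdot C=\{bc:b\in B,c\in C\}$. *)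

(* Defs.v *)
From HB Require Import structures.
From mathcomp Require Import all_boot all_order all_algebra all_fingroup.
Set Implicit Arguments. Unset Strict Implicit. Unset Printing Implicit Defensive.
Import Order.TTheory GRing.Theory Num.Theory.
Local Open Scope ring_scope.

Section Defs.
Variable R : finComUnitRingType.

Definition is_ideal (I : {set R}) : Prop :=
  [/\ 0 \in I, (forall x y, x \in I -> y \in I -> x + y \in I)
    & (forall a x, x \in I -> a * x \in I)].

Definition pideal (a : R) : {set R} := [set b * a | b : R].

Definition maximal_ideal (M : {set R}) : Prop :=
  [/\ is_ideal M, M != [set: R]
    & forall J, is_ideal J -> M \subset J -> J = M \/ J = [set: R]].

Definition local_ring : Prop :=
  exists M, maximal_ideal M /\ forall M', maximal_ideal M' -> M' = M.

Definition principal_ring : Prop :=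
  forall I, is_ideal I -> exists a, I = pideal a.

Definition finite_valuation_ring : Prop := local_ring /\ principal_ring.

Definition uniformizer (z : R) : Prop := maximal_ideal (pideal z).

(* cardinality of the residue ring R/(z): the number of cosets x + (z) *)
Definition residue_card (z : R) : nat :=
  #|[set [set x + y | y in pideal z] | x : R]|.

Definition nil_degree (z : R) (r : nat) : Prop :=
  z ^+ r = 0 /\ forall k, (k < r)%N -> z ^+ k != 0.
End Defs.

Definition mu (gT : finType) (T : finType) (G : {set gT}) (phi : gT -> T) : nat :=
  \max_(t : T) #|[set x in G | phi x == t]|.

(* Main.v *)
Require Import Defs.
From HB Require Import structures.
From mathcomp Require Import all_boot all_order all_algebra all_fingroup.
From mathcomp Require Import ring lra zify.
Import Order.TTheory GRing.Theory Num.Theory FinRing.Theory.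

Module Part1.

Set Implicit Arguments. Unset Strict Implicit. Unset Printing Implicit Defensive.
Local Open Scope ring_scope.

Section RingFacts.
Variable R : finComUnitRingType.

Definition idealb (J : {set R}) : bool :=
  [&& 0 \in J, [forall x, forall y, (x \in J) ==> (y \in J) ==> (x+y \in J)]
    & [forall a, forall x, (x \in J) ==> (a*x \in J)]].

Lemma idealbP J : reflect (@is_ideal R J) (idealb J).
Proof.
apply: (iffP idP).
  case/and3P=> H0 /forallP H1 /forallP H2; split=> //.
    by move=> x y Hx Hy; move/forallP: (H1 x) => /(_ y); rewrite Hx Hy.
  by move=> a x Hx; move/forallP: (H2 a) => /(_ x); rewrite Hx.
case=> H0 H1 H2; rewrite /idealb H0 /=; apply/andP; split.
  by apply/forallP=> x; apply/forallP=> y; apply/implyP=> Hx; apply/implyP=> Hy; apply: H1.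
by apply/forallP=> a; apply/forallP=> x; apply/implyP=> Hx; apply: H2.
Qed.

Lemma pideal_ideal (x : R) : is_ideal (pideal x).
Proof.
split.
- by apply/imsetP; exists 0; rewrite ?mul0r.
- move=> a b /imsetP[a' _ ->] /imsetP[b' _ ->]; apply/imsetP; exists (a' + b') => //.
  by rewrite mulrDl.
- move=> a b /imsetP[b' _ ->]; apply/imsetP; exists (a * b') => //; by rewrite mulrA.
Qed.

Lemma mem_pideal (x : R) : x \in pideal x.
Proof. by apply/imsetP; exists 1; rewrite ?mul1r. Qed.

Lemma ideal_one (J : {set R}) : is_ideal J -> 1 \in J -> J = [set: R].
Proof.
case=> _ _ H2 H1; apply/setP=> a; rewrite inE.
by have := H2 a 1 H1; rewrite mulr1.
Qed.

Lemma ideal_sub (J : {set R}) x : is_ideal J -> x \in J -> pideal x \subset J.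
Proof. by case=> _ _ H2 Hx; apply/subsetP=> y /imsetP[b _ ->]; apply: H2. Qed.

Lemma nonunit_pideal (x : R) : x \isn't a GRing.unit -> 1 \notin pideal x.
Proof.
move=> Hx; apply/negP=> /imsetP[b _ Hb]; move/negP: Hx; apply.
by apply/unitrPr; exists b; rewrite mulrC.
Qed.

Lemma exists_max (x : R) : x \isn't a GRing.unit ->
  exists J, maximal_ideal J /\ x \in J.
Proof.
move=> Hx.
pose S := fun J : {set R} => [&& idealb J, pideal x \subset J & 1 \notin J].
have HxS : S (pideal x).
  rewrite /S subxx nonunit_pideal // andbT andbT; apply/idealbP; exact: pideal_ideal.
case: (@arg_maxnP _ (pideal x) S (fun J => #|J|) HxS) => J.
move=> HJS Hmax; move: HJS; rewrite /S; case/and3P => /idealbP HJ HsJ H1J.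
exists J; split; last by apply: (subsetP HsJ); apply: mem_pideal.
split=> //.
  by apply/eqP=> HT; move/negP: H1J; apply; rewrite HT inE.
move=> J' HJ' HJJ'.
case H1: (1 \in J'); first by right; apply: ideal_one.
left; apply/eqP; rewrite eq_sym eqEcard HJJ' /=.
apply: Hmax; rewrite /S H1 andbT; apply/andP; split; first by apply/idealbP.
exact: subset_trans HJJ'.
Qed.

Variable z : R.
Hypothesis Hloc : local_ring R.
Hypothesis Hz : uniformizer z.

Lemma nonunit_in x : x \isn't a GRing.unit -> x \in pideal z.
Proof.
move=> Hx; case: (exists_max Hx) => J [HJ HxJ].
case: Hloc => M0 [_ HM].
by rewrite (HM _ Hz) -(HM _ HJ).
Qed.

Lemma in_nonunit x : x \in pideal z -> x \isn't a GRing.unit.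
Proof.
move=> Hx; apply/negP=> Hu.
case: Hz => HI HT _; move/negP: HT; apply; apply/eqP; apply: ideal_one => //.
case: HI => _ _ H2; have := H2 (x^-1) x Hx; by rewrite mulVr.
Qed.

End RingFacts.


End Part1.
Import Part1.

Module Part2.

Set Implicit Arguments. Unset Strict Implicit. Unset Printing Implicit Defensive.

Lemma card_fib (T U : finType) (f : T -> U) (D : {set T}) k :
  (forall x, x \in D -> #|[set y in D | f y == f x]| = k) ->
  #|D| = (#|f @: D| * k)%N.
Proof.
move=> Hk; rewrite -sum1_card (partition_big_imset f) /= -sum_nat_const.
apply: eq_bigr=> j /imsetP[x Hx ->].
rewrite -(Hk x Hx) -sum1_card; apply: eq_bigl => y; by rewrite inE.
Qed.

Lemma card_fib_le (T U : finType) (f : T -> U) (D : {set T}) k :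
  (forall x, x \in D -> #|[set y in D | f y == f x]| <= k)%N ->
  (#|D| <= #|f @: D| * k)%N.
Proof.
move=> Hk; rewrite -sum1_card (partition_big_imset f) /= -sum_nat_const.
apply: leq_sum=> j /imsetP[x Hx ->].
rewrite sum1_card; apply: leq_trans (Hk x Hx); apply: subset_leq_card.
by apply/subsetP=> y; rewrite !inE.
Qed.

Local Open Scope ring_scope.

Section Card.
Variable R : finComUnitRingType.

Definition ann (w : R) := [set a : R | a * w == 0].

Lemma card_ann_split (D : {set R}) (w : R) :
  (forall x y, x \in D -> y \in D -> x + y \in D) ->
  (forall x y, x \in D -> y \in D -> y - x \in D) ->
  ann w \subset D ->
  #|D| = (#|[set (a * w)%R | a in D]| * #|ann w|)%N.
Proof.
move=> HD HB Hann; apply: card_fib => x Hx.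
have -> : [set y in D | y * w == x * w] = [set a + x | a in ann w].
  apply/setP=> y; rewrite inE; apply/andP/imsetP.
    case=> Hy /eqP Hyx; exists (y - x); last by rewrite subrK.
    by rewrite inE mulrBl Hyx subrr.
  case=> a Ha ->; split; first by apply: HD => //; apply: (subsetP Hann).
  by move: Ha; rewrite inE mulrDl => /eqP ->; rewrite add0r.
by rewrite card_imset //; apply: addIr.
Qed.

Definition coset (z : R) x := [set x + y | y in pideal z].

Lemma pideal_add (z x y : R) : x \in pideal z -> y \in pideal z -> x + y \in pideal z.
Proof. by move=> /imsetP[a _ ->] /imsetP[b _ ->]; apply/imsetP; exists (a + b); rewrite ?mulrDl. Qed.

Lemma pideal_sub (z x y : R) : x \in pideal z -> y \in pideal z -> y - x \in pideal z.
Proof. by move=> /imsetP[a _ ->] /imsetP[b _ ->]; apply/imsetP; exists (b - a); rewrite ?mulrBl. Qed.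

Lemma pideal0 (z : R) : 0 \in pideal z.
Proof. by apply/imsetP; exists 0; rewrite ?mul0r. Qed.

Lemma coset_eq (z x y : R) : (coset z y == coset z x) = (y - x \in pideal z).
Proof.
apply/eqP/idP.
  move=> He; have : y \in coset z x by rewrite -He; apply/imsetP; exists 0; rewrite ?addr0 ?pideal0.
  case/imsetP=> a Ha ->; by rewrite addrC addKr.
move=> Hd; apply/setP=> u; apply/imsetP/imsetP.
  case=> a Ha ->; exists (y - x + a); first by apply: pideal_add.
  by ring.
case=> a Ha ->; exists (a - (y - x)); first by apply: pideal_sub.
by ring.
Qed.

Lemma card_R_q (z : R) : #|[set: R]| = (residue_card z * #|pideal z|)%N.
Proof.
rewrite /residue_card.
have -> : [set [set x + y | y in pideal z] | x : R] = coset z @: [set: R].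
  by apply/setP=> S; apply/imsetP/imsetP; case=> x _ ->; exists x.
apply: card_fib => x _.
have -> : [set y in [set: R] | coset z y == coset z x] = [set a + x | a in pideal z].
  apply/setP=> y; rewrite !inE coset_eq; apply/idP/imsetP.
    by move=> H; exists (y - x); rewrite ?subrK.
  by case=> a Ha ->; rewrite addrK.
by rewrite card_imset //; apply: addIr.
Qed.

End Card.


End Part2.
Import Part2.

Module Part3.

Set Implicit Arguments. Unset Strict Implicit. Unset Printing Implicit Defensive.
Local Open Scope ring_scope.

Section Val.
Variable R : finComUnitRingType.
Variable z : R.
Variable r : nat.
Hypothesis Hloc : local_ring R.
Hypothesis Hz : uniformizer z.
Hypothesis Hr : nil_degree z r.

Lemma pideal_setT (w : R) : [set (a * w)%R | a in [set: R]] = pideal w.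
Proof. by apply/setP=> u; apply/imsetP/imsetP; case=> a _ ->; exists a. Qed.

Lemma pideal_M (k : nat) : [set (a * z ^+ k)%R | a in pideal z] = pideal (z ^+ k.+1).
Proof.
apply/setP=> u; apply/imsetP/imsetP.
  by case=> a /imsetP[b _ ->] ->; exists b; rewrite // exprS mulrA.
by case=> b _ ->; exists (b * z); [apply/imsetP; exists b | rewrite exprS mulrA].
Qed.

Lemma ann_sub (k : nat) : (k < r)%N -> ann (z ^+ k) \subset pideal z.
Proof.
move=> Hk; apply/subsetP=> a; rewrite inE => /eqP Ha.
case Hu: (a \is a GRing.unit); last by apply: nonunit_in => //; rewrite Hu.
case: Hr => _ /(_ k Hk) /eqP; case.
by rewrite -(mulKr Hu (z ^+ k)) Ha mulr0.
Qed.

Lemma card_step (k : nat) : (k < r)%N ->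
  #|pideal (z ^+ k)| = (residue_card z * #|pideal (z ^+ k.+1)|)%N.
Proof.
move=> Hk.
have H1 := card_ann_split (D := [set: R]) (w := z ^+ k)
   (fun _ _ _ _ => in_setT _) (fun _ _ _ _ => in_setT _) (subsetT _).
have H2 := card_ann_split (D := pideal z) (w := z ^+ k)
   (@pideal_add _ z) (@pideal_sub _ z) (ann_sub Hk).
rewrite pideal_setT in H1; rewrite pideal_M in H2.
have Hpos : (0 < #|ann (z ^+ k)|)%N by apply/card_gt0P; exists 0; rewrite inE mul0r.
apply/eqP; rewrite -(eqn_pmul2r Hpos) -mulnA -H2 -H1.
by rewrite (card_R_q z).
Qed.

Lemma card_pow (j : nat) : (j <= r)%N -> #|pideal (z ^+ (r - j))| = (residue_card z ^ j)%N.
Proof.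
elim: j => [|j IH] Hj.
  rewrite subn0 expn0; case: Hr => -> _.
  have -> : pideal (0 : R) = [set 0].
    by apply/setP=> u; rewrite inE; apply/imsetP/eqP; [case=> b _ -> | move->; exists 0]; rewrite ?mulr0 ?mul0r.
  by rewrite cards1.
have Hlt : (r - j.+1 < r)%N by lia.
rewrite card_step // expnS; congr (_ * _)%N.
have -> : (r - j.+1).+1 = (r - j)%N by lia.
by apply: IH; lia.
Qed.

Lemma r_pos : (0 < r)%N.
Proof.
case: Hr => Hz0 _; case: r Hz0 => // H; rewrite expr0 in H.
by move/eqP: H; rewrite oner_eq0.
Qed.

Lemma card_R : #|[set: R]| = (residue_card z ^ r)%N.
Proof.
have E : pideal (1 : R) = [set: R].
  by apply/setP=> u; rewrite inE; apply/imsetP; exists u; rewrite ?mulr1.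
by rewrite -card_pow // subnn expr0 E.
Qed.

Lemma card_M : #|pideal z| = (residue_card z ^ r.-1)%N.
Proof.
have := r_pos => Hp.
rewrite -card_pow; last by lia.
by have -> : (r - r.-1)%N = 1%N by lia.
Qed.

End Val.


End Part3.
Import Part3.

Module Part4.

Set Implicit Arguments. Unset Strict Implicit. Unset Printing Implicit Defensive.

Lemma sum_bool_card (T : finType) (A : {pred T}) (P : pred T) :
  \sum_(x in A) (P x : nat) = #|[set x in A | P x]|.
Proof.
rewrite -[RHS]sum1_card [RHS](eq_bigl (fun x => (x \in A) && P x)); last by move=> x; rewrite inE.
by rewrite big_mkcondr; apply: eq_bigr => x _; case: (P x).
Qed.

Section Inc.
Variable R : finComUnitRingType.
Local Open Scope ring_scope.

Definition inc (l p : R * R) : bool := p.1 == l.1 * p.2 + l.2.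

Lemma line_card (l : R * R) : #|[set p | inc l p]| = #|[set: R]|.
Proof.
have -> : [set p | inc l p] = [set (l.1 * v + l.2, v) | v in [set: R]].
  apply/setP=> -[u v]; rewrite inE /inc /=; apply/eqP/imsetP.
    by move=> ->; exists v; rewrite ?inE.
  by case=> w _ [-> ->].
by rewrite card_imset // => v w [].
Qed.

Lemma line_sum (l : R * R) : (\sum_p (inc l p : nat) = #|[set: R]|)%N.
Proof. by rewrite sum_bool_card -(line_card l); apply: eq_card => p; rewrite !inE. Qed.

Lemma inter_unit (l l' : R * R) : l'.1 - l.1 \is a GRing.unit ->
  (#|[set p | inc l p && inc l' p]| <= 1)%N.
Proof.
move=> Hu; apply/card_le1_eqP => -[u v] [u' v']; rewrite !inE /inc /=.
case/andP=> /eqP H1 /eqP H2 /andP[/eqP H3 /eqP H4].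
have Hv : forall w, l.1 * w + l.2 = l'.1 * w + l'.2 -> w = (l'.1 - l.1)^-1 * (l.2 - l'.2).
  move=> w Hw; apply: (mulrI Hu); rewrite mulrA mulrV // mul1r.
  rewrite mulrBl; transitivity ((l'.1 * w + l'.2) - (l.1 * w + l.2) + (l.2 - l'.2)).
    by ring.
  by rewrite -Hw subrr add0r.
have Ev : v = v'.
  rewrite (Hv v); last by rewrite -H1 -H2.
  by rewrite (Hv v') // -H3 -H4.
by rewrite H1 H3 Ev.
Qed.

Variable M : {set R}.
Hypothesis HM : forall x, x \isn't a GRing.unit -> x \in M.

Lemma pencil_card (s : R) (p : R * R) :
  #|[set l' | (l'.1 - s \in M) && inc l' p]| = #|M|.
Proof.
have -> : [set l' | (l'.1 - s \in M) && inc l' p] =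
          [set (s + a, p.1 - (s + a) * p.2) | a in M].
  apply/setP=> -[s' t']; rewrite inE /inc /=; apply/andP/imsetP.
    case=> Ha /eqP Hp; exists (s' - s) => //; rewrite addrC subrK; congr (_, _).
    by rewrite Hp addrC addKr.
  case=> a Ha [-> ->]; split; first by rewrite addrC addKr.
  by rewrite addrC subrK.
by rewrite card_imset // => a b [] /addrI.
Qed.

Lemma sum_d (L : {set R * R}) :
  (\sum_p \sum_(l in L) (inc l p : nat) = #|L| * #|[set: R]|)%N.
Proof.
rewrite exchange_big /= -sum_nat_const; apply: eq_bigr => l _.
exact: line_sum.
Qed.

Lemma sum_d2 (L : {set R * R}) :
  (\sum_p (\sum_(l in L) (inc l p : nat)) ^ 2 <=
     #|L| ^ 2 + #|L| * #|[set: R]| * #|M|)%N.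
Proof.
have E : forall p, ((\sum_(l in L) (inc l p : nat)) ^ 2 =
   \sum_(l in L) \sum_(l' in L) (inc l p && inc l' p : nat))%N.
  move=> p; rewrite expnS expn1 big_distrl /=; apply: eq_bigr => l _.
  rewrite big_distrr /=; apply: eq_bigr => l' _; by rewrite mulnb.
rewrite (eq_bigr _ (fun p _ => E p)) exchange_big /=.
rewrite (_ : (#|L| ^ 2 + #|L| * #|[set: R]| * #|M| =
   \sum_(l in L) (#|L| + #|[set: R]| * #|M|))%N); last first.
  by rewrite sum_nat_const expnS expn1 mulnDr mulnA.
apply: leq_sum => l Hl.
rewrite exchange_big /=.
have B1 : forall l', (\sum_p (inc l p && inc l' p : nat) <=
    1 + ((l'.1 - l.1)%R \in M) * \sum_p (inc l p && inc l' p : nat))%N.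
  move=> l'; case Hu: (l'.1 - l.1 \is a GRing.unit).
    by rewrite sum_bool_card; apply: leq_trans (inter_unit Hu) _; rewrite (eq_card (B := [set p | inc l p && inc l' p])) ?leq_addr // => p; rewrite !inE.
  by rewrite HM ?Hu // mul1n leq_addl.
apply: (@leq_trans (\sum_(l' in L) (1 + ((l'.1 - l.1)%R \in M) * \sum_p (inc l p && inc l' p : nat)))%N).
  by apply: leq_sum => l' _; apply: B1.
rewrite big_split /= sum_nat_const muln1 leq_add2l.
apply: leq_trans (_ : \sum_l' ((l'.1 - l.1)%R \in M) * \sum_p (inc l p && inc l' p : nat) <= _)%N.
  by rewrite [leqRHS](bigID (fun x => x \in L)) /= leq_addr.
under eq_bigr do rewrite big_distrr /=.
rewrite exchange_big /=.
have E2 : forall p, (\sum_l' ((l'.1 - l.1)%R \in M) * (inc l p && inc l' p : nat) =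
             (inc l p : nat) * #|M|)%N.
  move=> p; case: (inc l p) => /=.
    rewrite mul1n -(pencil_card l.1 p) -sum1_card [RHS]big_mkcond /=.
    by apply: eq_bigr => l' _; rewrite inE; case: (_ \in M); case: (inc l' p).
  by rewrite mul0n big1 // => l' _; rewrite muln0.
rewrite (eq_bigr _ (fun p _ => E2 p)) -big_distrl /= line_sum.
by rewrite mulnC.
Qed.

End Inc.


End Part4.
Import Part4.

Module Part5.

Set Implicit Arguments. Unset Strict Implicit. Unset Printing Implicit Defensive.
Local Open Scope ring_scope.

Section CS.
Variable F : realFieldType.

Lemma sum_sq_expand (T : finType) (A : {pred T}) (a : T -> F) (k S : F) :
  \sum_(i in A) (k * a i - S) ^+ 2 =
  k ^+ 2 * \sum_(i in A) a i ^+ 2 - 2 * k * S * \sum_(i in A) a i + S ^+ 2 * #|A|%:R.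
Proof.
rewrite (eq_bigr (fun i => k ^+ 2 * a i ^+ 2 + (- (2 * k * S) * a i + S ^+ 2))); last first.
  by move=> i _; ring.
rewrite big_split big_split /= -!mulr_sumr sumr_const -mulr_natr; ring.
Qed.

Lemma cauchy_schwarz (T : finType) (A : {pred T}) (a : T -> F) :
  (\sum_(i in A) a i) ^+ 2 <= #|A|%:R * \sum_(i in A) a i ^+ 2.
Proof.
set k : F := #|A|%:R; set S := \sum_(i in A) a i.
case: (posnP #|A|) => HA.
  have HS : S = 0 by rewrite /S big_pred0 // => i; rewrite (card0_eq HA).
  by rewrite HS expr0n /= /k HA mul0r.
have Hk : 0 < k by rewrite /k ltr0n.
have H0 : 0 <= \sum_(i in A) (k * a i - S) ^+ 2 by apply: sumr_ge0 => i _; apply: sqr_ge0.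
rewrite sum_sq_expand -/S -/k in H0.
have : 0 <= k * (k * \sum_(i in A) a i ^+ 2 - S ^+ 2) by lra.
rewrite pmulr_rge0 //; lra.
Qed.

Lemma var_bound (T : finType) (d : T -> nat) (P : {pred T}) (n N K : nat) :
  #|T| = (n ^ 2)%N ->
  (\sum_p d p = N * n)%N ->
  (\sum_p d p ^ 2 <= N ^ 2 + N * n * K)%N ->
  ((n * \sum_(p in P) d p)%:R - (#|P| * N)%:R) ^+ 2 <= (#|P| * n ^ 3 * N * K)%:R :> F.
Proof.
move=> HT H1 H2.
pose a p : F := n%:R * (d p)%:R - N%:R.
have E1 : (n * \sum_(p in P) d p)%:R - (#|P| * N)%:R = \sum_(p in P) a p.
  rewrite /a sumrB -mulr_sumr -natr_sum sumr_const -mulr_natr !natrM; ring.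
rewrite E1; apply: le_trans (cauchy_schwarz P a) _.
have E2 : \sum_(p in P) a p ^+ 2 <= \sum_p a p ^+ 2.
  rewrite [leRHS](bigID (fun p => p \in P)) /= lerDl.
  by apply: sumr_ge0 => i _; apply: sqr_ge0.
have E3 : \sum_p a p ^+ 2 <= (n ^ 3 * N * K)%:R.
  rewrite /a (@sum_sq_expand T predT (fun p => (d p)%:R)) /=.
  have -> : \sum_p ((d p)%:R : F) ^+ 2 = (\sum_p d p ^ 2)%:R by rewrite natr_sum; apply: eq_bigr => p _; rewrite natrX.
  rewrite -natr_sum H1 cardT -cardE HT.
  have H2' : (\sum_p d p ^ 2)%:R <= (N ^ 2 + N * n * K)%:R :> F by rewrite ler_nat.
  rewrite !natrM !natrD !natrX !natrM in H2' *.
  set x := (\sum_p d p ^ 2)%:R in H2' *.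
  have Hn : 0 <= n%:R :> F by [].
  nra.
rewrite [X in _ <= X](_ : _ = #|P|%:R * (n ^ 3 * N * K)%:R); last by rewrite -natrM !mulnA.
by apply: ler_wpM2l => //; apply: le_trans E2 E3.
Qed.

End CS.


End Part5.
Import Part5.

Module Part6.

Set Implicit Arguments. Unset Strict Implicit. Unset Printing Implicit Defensive.
Local Open Scope ring_scope.

Lemma nat_case2 (n K N b I Pn : nat) :
  (0 < n)%N -> (0 < N)%N -> (N * b <= I)%N -> (Pn * N < n * I)%N -> (n * I <= 2 * (Pn * N))%N = false ->
  ((n * I - Pn * N) ^ 2 <= Pn * n ^ 3 * N * K)%N ->
  (N * b ^ 2 <= 4 * Pn * n * K)%N.
Proof.
move=> Hn HN Hb Hlt Hle H.
have H1 : (n * N * b <= 2 * (n * I - Pn * N))%N.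
  have : (n * (N * b) <= n * I)%N by rewrite leq_mul2l Hb orbT.
  move/negbT: Hle; rewrite -ltnNge; lia.
have H2 : ((n * N * b) ^ 2 <= 4 * (Pn * n ^ 3 * N * K))%N.
  apply: leq_trans (_ : (2 * (n * I - Pn * N)) ^ 2 <= _)%N.
    by rewrite leq_exp2r.
  by rewrite expnMn (_ : 2 ^ 2 = 4)%N // leq_mul2l H orbT.
have E : ((n * N * b) ^ 2 = (n * n * N) * (N * b ^ 2))%N by ring.
have E' : (4 * (Pn * n ^ 3 * N * K) = (n * n * N) * (4 * Pn * n * K))%N by ring.
have Hp : (0 < n * n * N)%N by rewrite !muln_gt0 Hn HN.
by rewrite E E' leq_pmul2l in H2.
Qed.

Lemma final_arith (F : realFieldType) (n K q r a b c N I Pn m : nat) :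
  n = (q ^ r)%N -> (n * K = q ^ (2 * r - 1))%N -> (0 < q)%N ->
  (N * b <= I)%N -> (a * c <= N * m)%N ->
  ((n * I)%:R - (Pn * N)%:R) ^+ 2 <= (Pn * n ^ 3 * N * K)%:R :> F ->
  1 / 4 * Num.min ((q ^ r * b)%:R / m%:R)
                  ((a * b ^ 2 * c)%:R / (m ^ 2 * q ^ (2 * r - 1))%:R)
    <= Pn%:R :> F.
Proof.
move=> Hn HnK Hq Hb Hac Hv.
have Hn0 : (0 < n)%N by rewrite Hn expn_gt0 Hq.
have HK0 : (0 < K)%N.
  by have := expn_gt0 q (2 * r - 1); rewrite Hq -HnK muln_gt0 => /andP[].
rewrite -Hn -HnK.
suff : Num.min ((n * b)%:R / m%:R) ((a * b ^ 2 * c)%:R / (m ^ 2 * (n * K))%:R) <= 4 * Pn%:R :> F.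
  by move=> H; lra.
case: (posnP m) => Hm.
  by rewrite Hm invr0 mulr0 ge_min; apply/orP; left; rewrite mulr_ge0.
have Hmr : 0 < m%:R :> F by rewrite ltr0n.
case: (posnP N) => HN.
  have : (a * c = 0)%N by move: Hac; rewrite HN mul0n; lia.
  move=> Hac0; rewrite ge_min; apply/orP; right.
  rewrite (_ : (a * b ^ 2 * c = 0)%N); last by rewrite mulnAC Hac0 mul0n.
  by rewrite mul0r mulr_ge0.
case Hle: (n * I <= 2 * (Pn * N))%N.
  rewrite ge_min; apply/orP; left.
  rewrite ler_pdivrMr //.
  have H0 : (N * (n * b) <= N * (2 * Pn))%N.
    have : (n * (N * b) <= n * I)%N by rewrite leq_mul2l Hb orbT.
    rewrite mulnCA (_ : N * (2 * Pn) = 2 * (Pn * N))%N; last by ring.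
    by move=> H; apply: leq_trans H Hle.
  rewrite leq_pmul2l // in H0.
  rewrite -!natrM ler_nat.
  apply: leq_trans H0 _; rewrite -mulnA leq_mul // ?leq_pmulr //.
have Hlt : (Pn * N < n * I)%N.
  rewrite ltnNge; apply/negP => H; move: Hle; rewrite (leq_trans H) //.
  by rewrite leq_pmull.
have Hv' : ((n * I - Pn * N) ^ 2 <= Pn * n ^ 3 * N * K)%N.
  rewrite -(ler_nat F) natrX natrB; first exact: Hv.
  exact: ltnW.
have HNb := nat_case2 Hn0 HN Hb Hlt Hle Hv'.
rewrite ge_min; apply/orP; right.
rewrite ler_pdivrMr; last by rewrite ltr0n muln_gt0 expn_gt0 Hm muln_gt0 Hn0 HK0.
rewrite -!natrM ler_nat.
apply: leq_trans (_ : N * m * b ^ 2 <= _)%N.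
  by rewrite mulnAC leq_mul2r Hac orbT.
rewrite (_ : (4 * Pn * (m ^ 2 * (n * K)) = (4 * Pn * n * K) * m * m)%N); last by ring.
have := leq_mul HNb (leqnn m) => H.
apply: (@leq_trans (4 * Pn * n * K * m)).
  by rewrite (_ : N * m * b ^ 2 = N * b ^ 2 * m)%N //; ring.
by rewrite leq_pmulr.
Qed.


End Part6.
Import Part6.


Local Open Scope ring_scope.

Unset Implicit Arguments. Unset Strict Implicit.
Theorem theorem1p10 (F : realFieldType) (r : nat) :
  exists c : F, 0 < c /\
  forall (R : finComUnitRingType) (z : R),
    finite_valuation_ring R -> uniformizer z -> nil_degree z r ->
  forall (G : {group {unit R}}) (g h : {unit R} -> {unit R})
         (A B C : {set {unit R}}),
    A \subset G ->
    let q := residue_card z in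
    let m := mu G (fun x => val (g x) * val (h x)) in
    let fAB := [set val (g x) * (val (h x) + val y) | x in A, y in B] in
    let BC := [set (x * y)%g | x in B, y in C] in
    c * Num.min ((q ^ r * #|B|)%:R / m%:R)
                ((#|A| * #|B| ^ 2 * #|C|)%:R / (m ^ 2 * q ^ (2 * r - 1))%:R)
      <= (#|fAB| * #|BC|)%:R.
Proof.
exists (1 / 4); split; first by lra.
move=> R z [Hloc _] Hz Hr G g h A B C HAG; cbv zeta.
set q := residue_card z.
set m := mu G _.
set fAB := [set _ | x in A, y in B].
set BC := [set _ | x in B, y in C].
have HM : forall x : R, x \isn't a GRing.unit -> x \in pideal z := nonunit_in Hloc Hz.
pose L : {set R * R} := [set (val (g x) / val c, val (g x) * val (h x)) | x in A, c in C].
pose P : {set R * R} := setX fAB [set val u | u in BC].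
pose d p := (\sum_(l in L) (inc l p : nat))%N.
have HPcard : #|P| = (#|fAB| * #|BC|)%N by rewrite cardsX card_imset //; apply: val_inj.
have HI : (#|L| * #|B| <= \sum_(p in P) d p)%N.
  rewrite /d exchange_big /= -sum_nat_const; apply: leq_sum => l /imset2P[x c Hx Hc ->].
  rewrite sum_bool_card.
  have -> : #|B| = #|[set (val (g x) * (val (h x) + val b), val (b * c)%g) | b : {unit R} in B]|.
    rewrite card_imset // => b b' [] /(mulrI (valP (g x))) /addrI /val_inj //.
  apply: subset_leq_card; apply/subsetP => p /imsetP[b Hb ->]; rewrite !inE /=.
  apply/andP; split; first (apply/andP; split).
  - by apply/imset2P; exists x b.
  - by apply/imsetP; exists (b * c)%g => //; apply/imset2P; exists b c.
  - rewrite /inc /=; apply/eqP.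
    rewrite mulrDr addrC; congr (_ + _).
    by rewrite (mulrC (val b) (val c)) -mulrA mulKr // (valP c).
have HL : (#|A| * #|C| <= #|L| * m)%N.
  rewrite -cardsX.
  pose f (p : {unit R} * {unit R}) := (val (g p.1) / val p.2, val (g p.1) * val (h p.1)).
  have -> : L = f @: setX A C by rewrite /L curry_imset2X; apply: eq_imset => -[x c].
  apply: card_fib_le => p0 Hp0.
  pose S := [set y in setX A C | f y == f p0].
  apply: (@leq_trans #|[set p.1 | p in S]|).
    rewrite card_in_imset //.
    move=> [x c] [x' c']; rewrite !inE /= => /andP[_ /eqP E1] /andP[_ /eqP E2] /= Ex.
    subst x'; rewrite -E2 in E1; case: E1 => /(mulrI (valP (g x))) /invr_inj /val_inj ->.
    done.
  apply: (@leq_trans #|[set x in G | val (g x) * val (h x) == (f p0).2]|).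
    apply: subset_leq_card; apply/subsetP => x /imsetP[p]; rewrite !inE => /andP[/andP[HpA _] /eqP Ep] ->.
    by rewrite (subsetP HAG) // -Ep eqxx.
  exact: (leq_bigmax (F := fun t => #|[set x in G | val (g x) * val (h x) == t]|)).
have Hsd := sum_d L.
have Hsd2 := sum_d2 HM L.
have Hrp := r_pos Hr.
have HcR := card_R Hloc Hz Hr.
have HcM := card_M Hloc Hz Hr.
have HT : #|{: R * R}| = (#|[set: R]| ^ 2)%N by rewrite card_prod -cardsT; ring.
have Hv := var_bound F P HT Hsd Hsd2.
rewrite -HPcard.
have Hq : (0 < q)%N.
  have : (0 < #|[set: R]|)%N by apply/card_gt0P; exists 0; rewrite inE.
  by rewrite HcR expn_gt0 => /orP[] // /eqP Hr0; move: Hrp; rewrite Hr0.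
apply: (final_arith (n := #|[set: R]|) (K := #|pideal z|) (N := #|L|)
   (I := \sum_(p in P) d p) HcR _ Hq HI HL Hv).
by rewrite HcR HcM -expnD; congr (_ ^ _)%N; lia.
Qed.
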